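(* In the setting of the context (FSR scheme with direct flux reconstruction), let $\mathcal{E}_j=(\Phi_{j+1/2}-\Phi_{j-1/2})/h$ evaluated on exact nodal values. If $\kappa_3=\kappa-1$, $\theta=1/3$ and $\theta_3=0$, then as $h\to0$, with derivatives at $x_j$, $$\mathcal{E}_j=\frac{\partial f}{\partial x}-\frac1{30}\frac{\partial^5 f}{\partial x^5}h^4+\frac{\kappa-1}{32}\left[\frac{\partial D}{\partial x}\frac{\partial^5 u}{\partial x^5}+D(u(x_j))\frac{\partial^6 u}{\partial x^6}\right]h^5+O(h^6),$$ where $f$ denotes $f(u(x))$ and $\partial D/\partial x=\frac{d}{dx}D(u(x))$ (fourth-order accuracy).
   Context: Let $h>0$, uniform grid $x_i=ih$, $i\in\mathbb{Z}$. Let $u$ be a smooth real function of $x$, $u_i=u(x_i)$; let $f$ (flux) and $D$ (dissipation coefficient) be smooth real functions of one variable; $f_i=f(u_i)$. For nodal values $g_i$ define successive central differences $(g_x)_i=(g_{i+1}-g_{i-1})/(2h)$, $(g_{xx})_i=((g_x)_{i+1}-(g_x)_{i-1})/(2h)$, and for the face $i+1/2$ with $j=i$, $k=i+1$, define $T_j[g]=\frac h4((g_x)_k-(g_x)_j)-\frac{h^2}{4}(g_{xx})_j$, $T_k[g]=\frac h4((g_x)_k-(g_x)_j)-\frac{h^2}{4}(g_{xx})_k$. Reconstructed solution states (parameters $\kappa,\kappa_3$): $u_L=\kappa\frac{u_j+u_k}{2}+(1-\kappa)[u_j+\frac h2(u_x)_j]+\kappa_3T_j[u]$, $u_R=\kappa\frac{u_j+u_k}{2}+(1-\kappa)[u_k-\frac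 h2(u_x)_k]+\kappa_3T_k[u]$. Reconstructed fluxes (parameters $\theta,\theta_3$): $f_L=\theta\frac{f_j+f_k}{2}+(1-\theta)[f_j+\frac h2(f_x)_j]+\theta_3T_j[f]$, $f_R=\theta\frac{f_j+f_k}{2}+(1-\theta)[f_k-\frac h2(f_x)_k]+\theta_3T_k[f]$. Numerical flux: $\Phi_{i+1/2}=\frac12(f_L+f_R)-\frac12D_{i+1/2}(u_R-u_L)$, with $D_{i+1/2}=\bar D(u_i,u_{i+1})$ for a smooth symmetric $\bar D$ with $\bar D(v,v)=D(v)$. *)

(* Defs.v *)
From Stdlib Require Import Reals ZArith Lra.
From Coquelicot Require Import Coquelicot.
Open Scope R_scope.

Definition smooth1 (g : R -> R) : Prop :=
  forall (n : nat) (x : R), ex_derive_n g n x.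

Fixpoint Ck2 (k : nat) (g : R -> R -> R) : Prop :=
  match k with
  | O => forall a b : R,
           continuous (fun p : R * R => g (fst p) (snd p)) (a, b)
  | S k' =>
      (forall a b : R,
         continuous (fun p : R * R => g (fst p) (snd p)) (a, b)) /\
      (forall a b : R, ex_derive (fun t => g t b) a) /\
      (forall a b : R, ex_derive (fun t => g a t) b) /\
      Ck2 k' (fun a b => Derive (fun t => g t b) a) /\
      Ck2 k' (fun a b => Derive (fun t => g a t) b)
  end.

Definition smooth2 (g : R -> R -> R) : Prop := forall k : nat, Ck2 k g.

Definition cdx (h : R) (g : Z -> R) (i : Z) : R :=
  (g (i + 1)%Z - g (i - 1)%Z) / (2 * h).

Definition cdxx (h : R) (g : Z -> R) (i : Z) : R :=
  (cdx h g (i + 1)%Z - cdx h g (i - 1)%Z) / (2 * h).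

(** Face i+1/2, with j = i, k = i+1. *)
Definition Tj (h : R) (g : Z -> R) (i : Z) : R :=
  h / 4 * (cdx h g (i + 1)%Z - cdx h g i) - h ^ 2 / 4 * cdxx h g i.

Definition Tk (h : R) (g : Z -> R) (i : Z) : R :=
  h / 4 * (cdx h g (i + 1)%Z - cdx h g i) - h ^ 2 / 4 * cdxx h g (i + 1)%Z.

Definition recL (k k3 h : R) (g : Z -> R) (i : Z) : R :=
  k * ((g i + g (i + 1)%Z) / 2)
  + (1 - k) * (g i + h / 2 * cdx h g i)
  + k3 * Tj h g i.

Definition recR (k k3 h : R) (g : Z -> R) (i : Z) : R :=
  k * ((g i + g (i + 1)%Z) / 2)
  + (1 - k) * (g (i + 1)%Z - h / 2 * cdx h g (i + 1)%Z)
  + k3 * Tk h g i.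

(** Numerical flux Phi_{i+1/2} of the FSR scheme with direct flux
    reconstruction, for nodal solution values [uv]. *)
Definition num_flux (f : R -> R) (Dbar : R -> R -> R)
    (kappa kappa3 theta theta3 h : R) (uv : Z -> R) (i : Z) : R :=
  let fv := fun m => f (uv m) in
  1 / 2 * (recL theta theta3 h fv i + recR theta theta3 h fv i)
  - 1 / 2 * Dbar (uv i) (uv (i + 1)%Z)
      * (recR kappa kappa3 h uv i - recL kappa kappa3 h uv i).

Definition trunc_err (f : R -> R) (Dbar : R -> R -> R) (u : R -> R)
    (kappa kappa3 theta theta3 h x0 : R) : R :=
  let uv := fun m : Z => u (x0 + IZR m * h) in
  (num_flux f Dbar kappa kappa3 theta theta3 h uv 0%Z
   - num_flux f Dbar kappa kappa3 theta theta3 h uv (-1)%Z) / h.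

(* Main.v *)
Require Import Defs.
From Stdlib Require Import Reals ZArith Lra Lia.
From Coquelicot Require Import Coquelicot.
Open Scope R_scope.

Definition Sn (n : nat) (f : R -> R) : Prop :=
  forall k x, (k <= n)%nat -> ex_derive_n f k x.

Lemma Derive_n_S' f k x : Derive_n f (S k) x = Derive_n (Derive f) k x.
Proof.
  revert x; induction k; intros x. reflexivity.
  simpl. apply Derive_ext. intros t. apply IHk.
Qed.

Lemma ex_derive_n_S' f k x :
  (forall y, ex_derive f y) -> ex_derive_n (Derive f) k x -> ex_derive_n f (S k) x.
Proof.
  intros Hf H. destruct k. simpl. apply Hf.
  simpl in *. eapply ex_derive_ext; [|exact H].
  intros t. symmetry. apply (Derive_n_S' f k t).
Qed.

Lemma ex_derive_n_S'' f k x :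
  ex_derive_n f (S k) x -> ex_derive_n (Derive f) k x.
Proof.
  intros H. destruct k. exact I.
  simpl in *. eapply ex_derive_ext; [|exact H].
  intros t. apply (Derive_n_S' f k t).
Qed.

Lemma Sn_S n f : (forall x, ex_derive f x) -> Sn n (Derive f) -> Sn (S n) f.
Proof.
  intros H1 H2 k x Hk. destruct k. exact I.
  apply ex_derive_n_S'; auto. apply H2. lia.
Qed.

Lemma Sn_S_inv n f : Sn (S n) f -> (forall x, ex_derive f x) /\ Sn n (Derive f).
Proof.
  intros H. split.
  - intros x. apply (H 1%nat x). lia.
  - intros k x Hk. apply ex_derive_n_S''. apply H. lia.
Qed.

Lemma Sn_le n m f : (m <= n)%nat -> Sn n f -> Sn m f.
Proof. intros Hm H k x Hk. apply H. lia. Qed.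

Lemma Sn_ext n f g : (forall x, f x = g x) -> Sn n f -> Sn n g.
Proof. intros E H k x Hk. eapply ex_derive_n_ext; [exact E|]. apply H; auto. Qed.

Lemma Sn_0 f : Sn 0 f.
Proof. intros k x Hk. assert (k = 0%nat) by lia. subst. exact I. Qed.

Lemma Sn_const n : forall c, Sn n (fun _ => c).
Proof.
  induction n; intros c. apply Sn_0.
  apply Sn_S. intros; apply ex_derive_const.
  eapply Sn_ext; [|exact (IHn 0)]. intros x. simpl. symmetry. apply Derive_const.
Qed.

Lemma Sn_plus n : forall f g, Sn n f -> Sn n g -> Sn n (fun x => f x + g x).
Proof.
  induction n; intros f g Hf Hg. apply Sn_0.
  apply Sn_S_inv in Hf as [Hf1 Hf2]. apply Sn_S_inv in Hg as [Hg1 Hg2].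
  apply Sn_S. intros x. apply (ex_derive_plus f g); auto.
  eapply Sn_ext; [|exact (IHn _ _ Hf2 Hg2)]. intros x. simpl.
  symmetry. apply (Derive_plus f g); auto.
Qed.

Lemma Sn_mult n : forall f g, Sn n f -> Sn n g -> Sn n (fun x => f x * g x).
Proof.
  induction n; intros f g Hf Hg. apply Sn_0.
  pose proof Hf as Hf'. pose proof Hg as Hg'.
  apply Sn_S_inv in Hf as [Hf1 Hf2]. apply Sn_S_inv in Hg as [Hg1 Hg2].
  apply Sn_S. intros x. apply (ex_derive_mult f g); auto.
  eapply Sn_ext.
  2:{ apply Sn_plus; apply IHn. exact Hf2. apply (Sn_le (S n)); [lia|exact Hg'].
        apply (Sn_le (S n)); [lia|exact Hf']. exact Hg2. }
  intros x. simpl. symmetry. apply (Derive_mult f g); auto.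
Qed.

Lemma Sn_comp n : forall f u, Sn n f -> Sn n u -> Sn n (fun x => f (u x)).
Proof.
  induction n; intros f u Hf Hu. apply Sn_0.
  pose proof Hf as Hf'. pose proof Hu as Hu'.
  apply Sn_S_inv in Hf as [Hf1 Hf2]. apply Sn_S_inv in Hu as [Hu1 Hu2].
  apply Sn_S. intros x. apply (ex_derive_comp f u); auto.
  eapply Sn_ext.
  2:{ apply Sn_mult. exact Hu2. apply IHn. exact Hf2. eapply Sn_le; [|eassumption]; lia. }
  intros x. simpl. symmetry. rewrite (Derive_comp f u); auto.
Qed.

Lemma Sn_id n : Sn n (fun x => x).
Proof.
  destruct n. apply Sn_0. apply Sn_S. intros; apply ex_derive_id.
  eapply Sn_ext; [|apply (Sn_const n 1)]. intros x; simpl. symmetry. apply Derive_id.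
Qed.

Lemma smooth_Sn f : smooth1 f <-> forall n, Sn n f.
Proof.
  split. intros H n k x _. apply H.
  intros H n x. apply (H n). lia.
Qed.

Lemma smooth_comp f u : smooth1 f -> smooth1 u -> smooth1 (fun x => f (u x)).
Proof. rewrite !smooth_Sn. intros Hf Hu n. apply Sn_comp; auto. Qed.

Lemma smooth_shift u x0 : smooth1 u -> smooth1 (fun t => u (x0 + t)).
Proof.
  rewrite !smooth_Sn. intros Hu n. apply (Sn_comp n u (fun t => x0 + t)); auto.
  apply Sn_plus. apply Sn_const. apply Sn_id.
Qed.

Lemma sum_zero_pt (a : nat -> R) N :
  sum_f_R0 (fun m => 0 ^ m / INR (fact m) * a m) N = a 0%nat.
Proof.
  induction N. simpl. field.
  simpl sum_f_R0. rewrite IHN. idtac. unfold Rdiv. rewrite Rmult_0_l, Rmult_0_l. ring.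
Qed.

Lemma inv_fact_le1 n : / INR (fact n) <= 1.
Proof.
  assert (1 <= INR (fact n)). { apply (le_INR 1). pose proof (lt_O_fact n). lia. }
  rewrite <- Rinv_1. apply Rinv_le_contravar; lra.
Qed.

Lemma cont_bound (G : R -> R) (x0 : R) : ex_derive G x0 ->
  exists d, 0 < d /\ forall y, Rabs (y - x0) < d -> Rabs (G y) <= Rabs (G x0) + 1.
Proof.
  intros H. apply ex_derive_continuous in H.
  apply continuity_pt_filterlim in H.
  destruct (H 1 Rlt_0_1) as [a [Ha Hy]].
  exists a. split; auto. intros y Hyl.
  destruct (Req_dec y x0) as [->|Hne]. lra.
  assert (Hd := Hy y (conj (conj I (not_eq_sym Hne)) Hyl)).
  simpl in Hd; unfold R_dist in Hd. pose proof (Rabs_triang_inv (G y) (G x0)). lra.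
Qed.

Lemma taylor_loc (F : R -> R) (N : nat) (x0 : R) : smooth1 F -> exists M d, 0 < d /\ forall t, Rabs t <= d ->
  Rabs (F (x0 + t) - sum_f_R0 (fun m => t ^ m / INR (fact m) * Derive_n F m x0) N)
  <= M * Rabs t ^ S N.
Proof.
  intros HF.
  destruct (cont_bound (Derive_n F (S N)) x0 (HF (S (S N)) x0)) as [a [Ha Hb]].
  exists (Rabs (Derive_n F (S N) x0) + 1), (a / 2). split. lra.
  intros t Ht.
  assert (HM : 0 <= Rabs (Derive_n F (S N) x0) + 1) by (pose proof (Rabs_pos (Derive_n F (S N) x0)); lra).
  destruct (Rtotal_order t 0) as [Hneg|[Hz|Hpos]].
  -
    set (g := fun s => F (- s)).
    assert (Hg : forall s k, ex_derive_n g k s).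
    { intros s k. apply ex_derive_n_comp_opp. apply filter_forall. intros; apply HF. }
    destruct (Taylor_Lagrange g N (- x0) (- x0 - t)) as [z [Hz Heq]]. lra.
    intros; apply Hg.
    unfold g in Heq at 1. replace (- (- x0 - t)) with (x0 + t) in Heq by ring.
    rewrite Heq.
    rewrite (sum_eq _ (fun m => t ^ m / INR (fact m) * Derive_n F m x0)).
    2:{ intros i _. unfold g. rewrite Derive_n_comp_opp.
        2:{ apply filter_forall. intros; apply HF. }
        rewrite Ropp_involutive. replace (- x0 - t - - x0) with (- t) by ring.
        replace ((- t) ^ i / INR (fact i) * ((-1) ^ i * Derive_n F i x0)) with
          (((- t) * (-1)) ^ i / INR (fact i) * Derive_n F i x0)
          by (rewrite Rpow_mult_distr; set (p := (- t) ^ i); set (q := (-1) ^ i); unfold Rdiv; ring).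
        replace ((- t) * (-1)) with t by ring. reflexivity. }
    unfold g. rewrite Derive_n_comp_opp. 2:{ apply filter_forall. intros; apply HF. }
    replace (- x0 - t - - x0) with (- t) by ring.
    match goal with |- Rabs (?A + ?B - ?A) <= _ => replace (A + B - A) with B by ring end.
    unfold Rdiv. rewrite !Rabs_mult. rewrite Rabs_Rinv by apply INR_fact_neq_0.
    rewrite <- !RPow_abs. rewrite Rabs_Ropp. rewrite Rabs_m1, pow1.
    rewrite (Rabs_right (INR (fact (S N)))) by (apply Rle_ge, pos_INR).
    assert (H1 := inv_fact_le1 (S N)).
    assert (H2 : Rabs (Derive_n F (S N) (- z)) <= Rabs (Derive_n F (S N) x0) + 1).
    { apply Hb. rewrite Rabs_left1 by lra. rewrite Rabs_left in Ht by lra. lra. }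
    assert (H3 : 0 <= Rabs t ^ S N) by (apply pow_le, Rabs_pos).
    assert (H4 : 0 < / INR (fact (S N))) by (apply Rinv_0_lt_compat, INR_fact_lt_0).
    assert (H5 : 0 <= Rabs (Derive_n F (S N) (- z))) by apply Rabs_pos.
    rewrite Rmult_1_l.
    apply Rle_trans with (Rabs t ^ S N * 1 * (Rabs (Derive_n F (S N) x0) + 1)).
    apply Rmult_le_compat; try apply Rmult_le_compat; try lra; apply Rmult_le_pos; lra.
    lra.
  - subst t. rewrite sum_zero_pt. simpl Derive_n. rewrite Rplus_0_r, Rminus_eq_0, Rabs_R0.
    rewrite (pow_i (S N)) by lia. lra.
  - destruct (Taylor_Lagrange F N x0 (x0 + t)) as [z [Hz Heq]]. lra.
    intros; apply HF.
    rewrite Heq. replace (x0 + t - x0) with t by ring.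
    match goal with |- Rabs (?A + ?B - ?A) <= _ => replace (A + B - A) with B by ring end.
    unfold Rdiv. rewrite !Rabs_mult. rewrite Rabs_Rinv by apply INR_fact_neq_0.
    rewrite <- !RPow_abs.
    rewrite (Rabs_right (INR (fact (S N)))) by (apply Rle_ge, pos_INR).
    assert (H1 := inv_fact_le1 (S N)).
    assert (H2 : Rabs (Derive_n F (S N) z) <= Rabs (Derive_n F (S N) x0) + 1).
    { apply Hb. rewrite Rabs_right by lra. rewrite Rabs_right in Ht by lra. lra. }
    assert (H3 : 0 <= Rabs t ^ S N) by (apply pow_le, Rabs_pos).
    assert (H4 : 0 < / INR (fact (S N))) by (apply Rinv_0_lt_compat, INR_fact_lt_0).
    assert (H5 : 0 <= Rabs (Derive_n F (S N) z)) by apply Rabs_pos.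
    apply Rle_trans with (Rabs t ^ S N * 1 * (Rabs (Derive_n F (S N) x0) + 1)).
    apply Rmult_le_compat; try apply Rmult_le_compat; try lra; apply Rmult_le_pos; lra.
    lra.
Qed.

Definition Ob (p : nat) (phi : R -> R) : Prop :=
  exists C d : R, 0 < d /\ forall h, 0 < h < d -> Rabs (phi h) <= C * h ^ p.

Lemma Ob_ext p f g : (forall h, 0 < h -> f h = g h) -> Ob p f -> Ob p g.
Proof.
  intros E [C [d [Hd H]]]. exists C, d. split; auto.
  intros h Hh. rewrite <- E by lra. auto.
Qed.

Lemma Ob_plus p f g : Ob p f -> Ob p g -> Ob p (fun h => f h + g h).
Proof.
  intros [C1 [d1 [Hd1 H1]]] [C2 [d2 [Hd2 H2]]].
  exists (C1 + C2), (Rmin d1 d2). split. apply Rmin_pos; auto.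
  intros h Hh. assert (h < d1) by (eapply Rlt_le_trans; [apply Hh|apply Rmin_l]).
  assert (h < d2) by (eapply Rlt_le_trans; [apply Hh|apply Rmin_r]).
  specialize (H1 h (conj (proj1 Hh) H)). specialize (H2 h (conj (proj1 Hh) H0)).
  eapply Rle_trans. apply Rabs_triang. lra.
Qed.

Lemma Ob_scal p c f : Ob p f -> Ob p (fun h => c * f h).
Proof.
  intros [C [d [Hd H]]]. exists (Rabs c * C), d. split; auto.
  intros h Hh. rewrite Rabs_mult, Rmult_assoc. apply Rmult_le_compat_l. apply Rabs_pos. auto.
Qed.

Lemma Ob_opp p f : Ob p f -> Ob p (fun h => - f h).
Proof.
  intros H. eapply Ob_ext; [|apply (Ob_scal p (-1) f H)]. intros; simpl; ring.
Qed.

Lemma Ob_minus p f g : Ob p f -> Ob p g -> Ob p (fun h => f h - g h).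
Proof. intros. apply Ob_plus; auto. apply Ob_opp; auto. Qed.

Lemma Ob_mult p q f g : Ob p f -> Ob q g -> Ob (p + q) (fun h => f h * g h).
Proof.
  intros [C1 [d1 [Hd1 H1]]] [C2 [d2 [Hd2 H2]]].
  exists (C1 * C2), (Rmin d1 d2). split. apply Rmin_pos; auto.
  intros h Hh. assert (h < d1) by (eapply Rlt_le_trans; [apply Hh|apply Rmin_l]).
  assert (h < d2) by (eapply Rlt_le_trans; [apply Hh|apply Rmin_r]).
  specialize (H1 h (conj (proj1 Hh) H)). specialize (H2 h (conj (proj1 Hh) H0)).
  rewrite Rabs_mult, pow_add.
  replace (C1 * C2 * (h ^ p * h ^ q)) with ((C1 * h ^ p) * (C2 * h ^ q)) by ring.
  apply Rmult_le_compat; auto; apply Rabs_pos.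
Qed.

Lemma pow_le_one h n : 0 <= h <= 1 -> 0 <= h ^ n <= 1.
Proof. intros H. induction n; simpl; nra. Qed.

Lemma Ob_weaken p q f : (q <= p)%nat -> Ob p f -> Ob q f.
Proof.
  intros Hqp [C [d [Hd H]]]. exists (Rabs C), (Rmin d 1). split. apply Rmin_pos; lra.
  intros h Hh. assert (h < d) by (eapply Rlt_le_trans; [apply Hh|apply Rmin_l]).
  assert (h < 1) by (eapply Rlt_le_trans; [apply Hh|apply Rmin_r]).
  eapply Rle_trans. apply H; lra.
  assert (0 <= h ^ p <= h ^ q).
  { split. apply pow_le; lra.
    replace p with (q + (p - q))%nat by lia. rewrite pow_add.
    assert (0 <= h ^ q) by (apply pow_le; lra).
    assert (0 <= h ^ (p - q) <= 1) by (apply pow_le_one; lra).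
    nra. }
  pose proof (Rle_abs C). pose proof (Rabs_pos C). nra.
Qed.

Lemma Ob_divh p f : Ob (S p) f -> Ob p (fun h => f h / h).
Proof.
  intros [C [d [Hd H]]]. exists C, d. split; auto.
  intros h Hh. specialize (H h Hh). simpl in H.
  unfold Rdiv. rewrite Rabs_mult, Rabs_inv, (Rabs_right h) by lra.
  apply (Rmult_le_reg_r h). lra. rewrite Rmult_assoc, Rinv_l by lra. nra.
Qed.

Lemma Ob_const c : Ob 0 (fun _ => c).
Proof. exists (Rabs c), 1. split. lra. intros. simpl. lra. Qed.

Lemma Ob_pow p : Ob p (fun h => h ^ p).
Proof.
  exists 1, 1. split. lra. intros h Hh. rewrite Rabs_right. lra.
  apply Rle_ge, pow_le; lra.
Qed.

Lemma Ob_of_local (G : R -> R) N (m : R) :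
  (exists M d, 0 < d /\ forall t, Rabs t <= d -> Rabs (G t) <= M * Rabs t ^ N) ->
  Ob N (fun h => G (m * h)).
Proof.
  intros [M [d [Hd H]]]. exists (Rabs M * Rabs m ^ N), (d / (Rabs m + 1)).
  pose proof (Rabs_pos m).
  split. apply Rdiv_lt_0_compat; lra.
  intros h Hh.
  assert (Hmh : Rabs (m * h) <= d).
  { rewrite Rabs_mult, (Rabs_right h) by lra.
    destruct Hh as [Hh1 Hh2].
    assert (h * (Rabs m + 1) < d).
    { apply (Rmult_lt_compat_r (Rabs m + 1)) in Hh2; [|lra].
      unfold Rdiv in Hh2. rewrite Rmult_assoc, Rinv_l in Hh2 by lra. lra. }
    nra. }
  eapply Rle_trans. apply H; auto.
  rewrite Rabs_mult, (Rabs_right h), Rpow_mult_distr by lra.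
  assert (0 <= Rabs m ^ N * h ^ N).
  { apply Rmult_le_pos; apply pow_le; lra. }
  pose proof (Rle_abs M). nra.
Qed.



Lemma Ck2_partial2 k : forall g, Ck2 k g -> forall a b, ex_derive_n (g a) k b.
Proof.
  induction k; intros g Hg a b. exact I.
  destruct Hg as [_ [_ [H2 [_ H5]]]].
  apply ex_derive_n_S'. intros y. apply H2.
  apply (IHk _ H5 a b).
Qed.

Lemma smooth2_partial2 g a : smooth2 g -> smooth1 (g a).
Proof. intros H n x. apply (Ck2_partial2 n g (H n)). Qed.

Lemma between_abs v k c : Rmin v (v+k) <= c <= Rmax v (v+k) -> Rabs (c - v) <= Rabs k.
Proof. unfold Rmin, Rmax; destruct (Rle_dec v (v+k)); intros; unfold Rabs;
  destruct (Rcase_abs (c - v)); destruct (Rcase_abs k); lra. Qed.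

Lemma diag_deriv (g : R -> R -> R) (D : R -> R) (v : R) :
  (forall a b, g a b = g b a) -> (forall w, g w w = D w) ->
  (forall a b, ex_derive (fun t => g a t) b) ->
  continuous (fun p : R * R => Derive (fun t => g (fst p) t) (snd p)) (v, v) ->
  Derive D v = 2 * Derive (fun t => g v t) v.
Proof.
  intros Hs HD Hex Hc.
  apply is_derive_unique. apply is_derive_Reals.
  set (P2 := fun a b => Derive (fun t => g a t) b).
  assert (Hc2 : continuity_2d_pt P2 v v).
  { apply continuity_2d_pt_filterlim. exact Hc. }
  assert (MV : forall a x y, exists c, Rmin x y <= c <= Rmax x y /\
             g a y - g a x = P2 a c * (y - x)).
  { intros a x y. apply (MVT_gen (fun t => g a t) x y (P2 a)).
    - intros z _. apply Derive_correct. apply Hex.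
    - intros z _. apply continuity_pt_filterlim. apply (ex_derive_continuous (fun t => g a t) z). apply Hex. }
  intros eps Heps.
  destruct (Hc2 (mkposreal (eps / 2) ltac:(lra))) as [del Hdel]. simpl in Hdel.
  exists del. intros k Hk0 Hk.
  destruct (MV (v + k) v (v + k)) as [c1 [Hc1 E1]].
  destruct (MV v v (v + k)) as [c2 [Hc2' E2]].
  assert (ED : D (v + k) - D v = P2 (v + k) c1 * k + P2 v c2 * k).
  { rewrite <- !HD. replace (g (v + k) (v + k) - g v v) with
      ((g (v + k) (v + k) - g (v + k) v) + (g v (v + k) - g v v))
      by (rewrite (Hs (v + k) v); ring).
    rewrite E1, E2. ring. }
  pose proof (between_abs v k c1 Hc1) as B1.
  pose proof (between_abs v k c2 Hc2') as B2.
  assert (H1 := Hdel (v + k) c1 ltac:(replace (v + k - v) with k by ring; lra) ltac:(lra)).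
  assert (H2 := Hdel v c2 ltac:(replace (v - v) with 0 by ring; rewrite Rabs_R0; apply cond_pos) ltac:(lra)).
  replace ((D (v + k) - D v) / k - 2 * Derive (fun t => g v t) v) with
    ((P2 (v + k) c1 - P2 v v) + (P2 v c2 - P2 v v)).
  eapply Rle_lt_trans. apply Rabs_triang. lra.
  rewrite ED. unfold P2. field. auto.
Qed.

Definition S0 (u : R -> R) (x0 h : R) : R := - u (x0 + -2 * h) + 5 * u (x0 + -1 * h) - 10 * u (x0 + 0 * h)
   + 10 * u (x0 + 1 * h) - 5 * u (x0 + 2 * h) + u (x0 + 3 * h).
Definition S1 (u : R -> R) (x0 h : R) : R := - u (x0 + -3 * h) + 5 * u (x0 + -2 * h) - 10 * u (x0 + -1 * h)
   + 10 * u (x0 + 0 * h) - 5 * u (x0 + 1 * h) + u (x0 + 2 * h).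
Definition rho0 (u : R -> R) (x0 h : R) : R := S0 u x0 h - h ^ 5 * Derive_n u 5 x0 - h ^ 6 * Derive_n u 6 x0 / 2.
Definition rho1 (u : R -> R) (x0 h : R) : R := S1 u x0 h - h ^ 5 * Derive_n u 5 x0 + h ^ 6 * Derive_n u 6 x0 / 2.
Definition g01 (Dbar : R -> R -> R) (u : R -> R) (x0 h : R) : R := Dbar (u (x0 + 0 * h)) (u (x0 + 1 * h)).
Definition gm (Dbar : R -> R -> R) (u : R -> R) (x0 h : R) : R := Dbar (u (x0 + -1 * h)) (u (x0 + 0 * h)).
Definition Bq (Dbar : R -> R -> R) (D u : R -> R) (x0 h : R) : R := g01 Dbar u x0 h - gm Dbar u x0 h - h * Derive (fun y => D (u y)) x0.
Definition Diss (Dbar : R -> R -> R) (D u : R -> R) (kappa x0 h : R) : R :=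
  - (1 - kappa) / 32 / h *
  (Bq Dbar D u x0 h * S0 u x0 h
   + h * Derive (fun y => D (u y)) x0 * (h ^ 6 * Derive_n u 6 x0 / 2 + rho0 u x0 h)
   + gm Dbar u x0 h * (rho0 u x0 h - rho1 u x0 h)
   + (gm Dbar u x0 h - D (u x0)) * h ^ 6 * Derive_n u 6 x0).
Definition Flux6 (F : R -> R) (x0 h : R) : R :=
  (1 / 12 * F (x0 + -2 * h) - 2 / 3 * F (x0 + -1 * h) + 2 / 3 * F (x0 + 1 * h)
   - 1 / 12 * F (x0 + 2 * h)) / h - Derive F x0 + 1 / 30 * Derive_n F 5 x0 * h ^ 4.

Lemma main_identity u f D Dbar kappa x0 h : 0 < h ->
  trunc_err f Dbar u kappa (kappa - 1) (1 / 3) 0 h x0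
                - ( Derive (fun y => f (u y)) x0
                    - 1 / 30 * Derive_n (fun y => f (u y)) 5 x0 * h ^ 4
                    + (kappa - 1) / 32
                      * ( Derive (fun y => D (u y)) x0 * Derive_n u 5 x0
                          + D (u x0) * Derive_n u 6 x0 ) * h ^ 5 )
  = Flux6 (fun y => f (u y)) x0 h + Diss Dbar D u kappa x0 h.
Proof.
  intros Hh.
  unfold trunc_err, num_flux, recL, recR, Tj, Tk, cdxx, cdx. cbv beta zeta.
  simpl Z.add. simpl Z.sub.
  unfold Flux6, Diss, Bq, g01, gm, rho0, rho1, S0, S1.
  field. lra.
Qed.

Lemma fact0 : INR (fact 0) = 1.
Proof. simpl. ring. Qed.
Lemma fact1 : INR (fact 1) = 1.
Proof. simpl. ring. Qed.
Lemma fact2 : INR (fact 2) = 2.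
Proof. simpl. ring. Qed.
Lemma fact3 : INR (fact 3) = 6.
Proof. simpl. ring. Qed.
Lemma fact4 : INR (fact 4) = 24.
Proof. simpl. ring. Qed.
Lemma fact5 : INR (fact 5) = 120.
Proof. simpl. ring. Qed.
Lemma fact6 : INR (fact 6) = 720.
Proof. simpl. ring. Qed.

Definition P6 (F : R -> R) (x0 t : R) : R :=
  F x0 + Derive F x0 * t + Derive_n F 2 x0 * t ^ 2 / 2 + Derive_n F 3 x0 * t ^ 3 / 6
  + Derive_n F 4 x0 * t ^ 4 / 24 + Derive_n F 5 x0 * t ^ 5 / 120 + Derive_n F 6 x0 * t ^ 6 / 720.

Lemma taylor6 (F : R -> R) (x0 : R) : smooth1 F -> exists M d, 0 < d /\ forall t, Rabs t <= d ->
  Rabs (F (x0 + t) - P6 F x0 t) <= M * Rabs t ^ 7.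
Proof.
  intros HF. destruct (taylor_loc F 6 x0 HF) as [M [d [Hd H]]].
  exists M, d. split; auto. intros t Ht.
  replace (P6 F x0 t) with (sum_f_R0 (fun m => t ^ m / INR (fact m) * Derive_n F m x0) 6).
  apply H; auto.
  cbn [sum_f_R0]. change (Derive_n F 1 x0) with (Derive F x0).
  change (Derive_n F 0 x0) with (F x0). unfold P6.
  rewrite fact0, fact1, fact2, fact3, fact4, fact5, fact6. field.
Qed.

Lemma taylor1 (F : R -> R) (x0 : R) : smooth1 F -> exists M d, 0 < d /\ forall t, Rabs t <= d ->
  Rabs (F (x0 + t) - (F x0 + Derive F x0 * t)) <= M * Rabs t ^ 2.
Proof.
  intros HF. destruct (taylor_loc F 1 x0 HF) as [M [d [Hd H]]].
  exists M, d. split; auto. intros t Ht.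
  replace (F x0 + Derive F x0 * t) with (sum_f_R0 (fun m => t ^ m / INR (fact m) * Derive_n F m x0) 1).
  apply H; auto.
  cbn [sum_f_R0]. change (Derive_n F 1 x0) with (Derive F x0).
  change (Derive_n F 0 x0) with (F x0). rewrite fact0, fact1. field.
Qed.

Lemma taylor0 (F : R -> R) (x0 : R) : smooth1 F -> exists M d, 0 < d /\ forall t, Rabs t <= d ->
  Rabs (F (x0 + t) - F x0) <= M * Rabs t ^ 1.
Proof.
  intros HF. destruct (taylor_loc F 0 x0 HF) as [M [d [Hd H]]].
  exists M, d. split; auto. intros t Ht.
  replace (F x0) with (sum_f_R0 (fun m => t ^ m / INR (fact m) * Derive_n F m x0) 0).
  apply H; auto.
  cbn [sum_f_R0]. change (Derive_n F 0 x0) with (F x0). rewrite fact0. field.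
Qed.

Lemma Ob_node (F : R -> R) (x0 m : R) : smooth1 F -> Ob 7 (fun h => F (x0 + m * h) - P6 F x0 (m * h)).
Proof.
  intros HF. apply (Ob_of_local (fun t => F (x0 + t) - P6 F x0 t) 7 m).
  apply taylor6; auto.
Qed.

Lemma flux_Ob (F : R -> R) (x0 : R) : smooth1 F -> Ob 6 (Flux6 F x0).
Proof.
  intros HF.
  apply (Ob_ext 6 (fun h => (1 / 12 * (F (x0 + -2 * h) - P6 F x0 (-2 * h))
      - 2 / 3 * (F (x0 + -1 * h) - P6 F x0 (-1 * h))
      + 2 / 3 * (F (x0 + 1 * h) - P6 F x0 (1 * h))
      - 1 / 12 * (F (x0 + 2 * h) - P6 F x0 (2 * h))) / h)).
  { intros h Hh. unfold Flux6, P6. field. lra. }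
  apply Ob_divh.
  repeat first [apply Ob_node; assumption | apply Ob_scal | apply Ob_minus | apply Ob_plus | apply Ob_opp].
Qed.

Lemma rho0_Ob (u : R -> R) (x0 : R) : smooth1 u -> Ob 7 (rho0 u x0).
Proof.
  intros Hu.
  apply (Ob_ext 7 (fun h => - (u (x0 + -2 * h) - P6 u x0 (-2 * h))
     + 5 * (u (x0 + -1 * h) - P6 u x0 (-1 * h))
     - 10 * (u (x0 + 0 * h) - P6 u x0 (0 * h))
     + 10 * (u (x0 + 1 * h) - P6 u x0 (1 * h))
     - 5 * (u (x0 + 2 * h) - P6 u x0 (2 * h))
     + (u (x0 + 3 * h) - P6 u x0 (3 * h)))).
  { intros h Hh. unfold rho0, S0, P6. field. }
  repeat first [apply Ob_node; assumption | apply Ob_scal | apply Ob_minus | apply Ob_plus | apply Ob_opp].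
Qed.

Lemma rho1_Ob (u : R -> R) (x0 : R) : smooth1 u -> Ob 7 (rho1 u x0).
Proof.
  intros Hu.
  apply (Ob_ext 7 (fun h => - (u (x0 + -3 * h) - P6 u x0 (-3 * h))
     + 5 * (u (x0 + -2 * h) - P6 u x0 (-2 * h))
     - 10 * (u (x0 + -1 * h) - P6 u x0 (-1 * h))
     + 10 * (u (x0 + 0 * h) - P6 u x0 (0 * h))
     - 5 * (u (x0 + 1 * h) - P6 u x0 (1 * h))
     + (u (x0 + 2 * h) - P6 u x0 (2 * h)))).
  { intros h Hh. unfold rho1, S1, P6. field. }
  repeat first [apply Ob_node; assumption | apply Ob_scal | apply Ob_minus | apply Ob_plus | apply Ob_opp].
Qed.

Lemma S0_Ob (u : R -> R) (x0 : R) : smooth1 u -> Ob 5 (S0 u x0).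
Proof.
  intros Hu.
  apply (Ob_ext 5 (fun h => h ^ 5 * Derive_n u 5 x0 + h ^ 6 * (Derive_n u 6 x0 / 2) + rho0 u x0 h)).
  { intros h Hh. unfold rho0. field. }
  apply Ob_plus. apply Ob_plus.
  apply (Ob_mult 5 0). apply Ob_pow. apply Ob_const.
  apply (Ob_weaken 6). lia. apply (Ob_mult 6 0). apply Ob_pow. apply Ob_const.
  apply (Ob_weaken 7). lia. apply rho0_Ob; auto.
Qed.

Lemma Ob_id : Ob 1 (fun h => h).
Proof. apply (Ob_ext 1 (fun h => h ^ 1)). intros; simpl; ring. apply Ob_pow. Qed.

Lemma psi_facts (u D : R -> R) (Dbar : R -> R -> R) (x0 : R) :
  smooth1 u -> smooth1 D -> smooth2 Dbar -> (forall a b : R, Dbar a b = Dbar b a) ->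
  (forall v : R, Dbar v v = D v) ->
  Ob 2 (Bq Dbar D u x0) /\ Ob 1 (fun h => gm Dbar u x0 h - D (u x0)).
Proof.
  intros Hu HD HDbar Hsym Hdiag.
  assert (HG : smooth1 (Dbar (u x0))) by (apply smooth2_partial2; auto).
  set (psi := fun t => Dbar (u x0) (u (x0 + t))).
  assert (Hpsi : smooth1 psi).
  { exact (smooth_comp (Dbar (u x0)) (fun t => u (x0 + t)) HG (smooth_shift u x0 Hu)). }
  assert (Hpsi0 : psi 0 = D (u x0)).
  { unfold psi. rewrite Rplus_0_r. apply Hdiag. }
  assert (Hsh : Derive (fun t => u (x0 + t)) 0 = Derive u x0).
  { rewrite (Derive_comp u (fun t => x0 + t) 0).
    - rewrite Rplus_0_r. replace (Derive (fun t => x0 + t) 0) with 1. ring.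
      symmetry. apply is_derive_unique. auto_derive; auto.
    - rewrite Rplus_0_r. apply (Hu 1%nat).
    - auto_derive; auto. }
  assert (Hdd : Derive D (u x0) = 2 * Derive (fun t => Dbar (u x0) t) (u x0)).
  { destruct (HDbar 1%nat) as [_ [_ [H2 [_ H5]]]].
    apply diag_deriv; auto. }
  assert (Hd : Derive psi 0 = Derive (fun y => D (u y)) x0 / 2).
  { unfold psi.
    rewrite (Derive_comp (Dbar (u x0)) (fun t => u (x0 + t)) 0).
    2:{ apply (HG 1%nat). }
    2:{ apply (smooth_shift u x0 Hu 1%nat). }
    rewrite (Derive_comp D u x0).
    2:{ apply (HD 1%nat). }
    2:{ apply (Hu 1%nat). }
    rewrite Hsh, Rplus_0_r, Hdd.
    change (Derive (fun t => Dbar (u x0) t) (u x0)) with (Derive (Dbar (u x0)) (u x0)).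
    field. }
  split.
  - destruct (taylor1 psi 0 Hpsi) as [M [d [Hd0 HT]]].
    assert (Hloc : exists M d, 0 < d /\ forall t, Rabs t <= d ->
       Rabs ((fun t => psi (0 + t) - (psi 0 + Derive psi 0 * t)) t) <= M * Rabs t ^ 2).
    { exists M, d. split; auto. }
    pose proof (Ob_of_local _ 2 1 Hloc) as O1.
    pose proof (Ob_of_local _ 2 (-1) Hloc) as O2.
    apply (Ob_ext 2 (fun h => (psi (0 + 1 * h) - (psi 0 + Derive psi 0 * (1 * h)))
                    - (psi (0 + -1 * h) - (psi 0 + Derive psi 0 * (-1 * h))))).
    + intros h Hh. rewrite Hd. unfold Bq, g01, gm, psi.
      replace (x0 + 0 * h) with x0 by ring. replace (x0 + (0 + 1 * h)) with (x0 + 1 * h) by ring.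
      replace (x0 + (0 + -1 * h)) with (x0 + -1 * h) by ring.
      rewrite (Hsym (u (x0 + -1 * h)) (u x0)). field.
    + apply Ob_minus; [exact O1 | exact O2].
  - destruct (taylor0 psi 0 Hpsi) as [M [d [Hd0 HT]]].
    assert (Hloc : exists M d, 0 < d /\ forall t, Rabs t <= d ->
       Rabs ((fun t => psi (0 + t) - psi 0) t) <= M * Rabs t ^ 1).
    { exists M, d. split; auto. }
    pose proof (Ob_of_local _ 1 (-1) Hloc) as O2.
    apply (Ob_ext 1 (fun h => psi (0 + -1 * h) - psi 0)); [|exact O2].
    intros h Hh. rewrite Hpsi0. unfold gm, psi.
    replace (x0 + 0 * h) with x0 by ring.
    replace (x0 + (0 + -1 * h)) with (x0 + -1 * h) by ring.
    rewrite (Hsym (u (x0 + -1 * h)) (u x0)). reflexivity.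
Qed.

Theorem mainTheorem3 :
  forall (u f D : R -> R) (Dbar : R -> R -> R) (kappa : R),
    smooth1 u -> smooth1 f -> smooth1 D -> smooth2 Dbar ->
    (forall a b : R, Dbar a b = Dbar b a) ->
    (forall v : R, Dbar v v = D v) ->
    forall x0 : R,
      exists C delta : R, 0 < delta /\
        forall h : R, 0 < h < delta ->
          Rabs (trunc_err f Dbar u kappa (kappa - 1) (1 / 3) 0 h x0
                - ( Derive (fun y => f (u y)) x0
                    - 1 / 30 * Derive_n (fun y => f (u y)) 5 x0 * h ^ 4
                    + (kappa - 1) / 32
                      * ( Derive (fun y => D (u y)) x0 * Derive_n u 5 x0
                          + D (u x0) * Derive_n u 6 x0 ) * h ^ 5 ))
          <= C * h ^ 6.
Proof.
  intros u f D Dbar kappa Hu Hf HD HDbar Hsym Hdiag x0.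
  assert (HFc : smooth1 (fun y => f (u y))) by (apply smooth_comp; auto).
  destruct (psi_facts u D Dbar x0 Hu HD HDbar Hsym Hdiag) as [HB Hg1].
  assert (Hg0 : Ob 0 (gm Dbar u x0)).
  { apply (Ob_ext 0 (fun h => (gm Dbar u x0 h - D (u x0)) + D (u x0))).
    intros; ring. apply Ob_plus. apply (Ob_weaken 1); auto. apply Ob_const. }
  assert (HR0 := rho0_Ob u x0 Hu).
  assert (HR1 := rho1_Ob u x0 Hu).
  assert (HS0 := S0_Ob u x0 Hu).
  assert (HDiss : Ob 6 (Diss Dbar D u kappa x0)).
  { apply (Ob_ext 6 (fun h => (- (1 - kappa) / 32) *
       ((Bq Dbar D u x0 h * S0 u x0 h
        + (h * Derive (fun y => D (u y)) x0) * (h ^ 6 * (Derive_n u 6 x0 / 2) + rho0 u x0 h)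
        + gm Dbar u x0 h * (rho0 u x0 h - rho1 u x0 h)
        + (gm Dbar u x0 h - D (u x0)) * (h ^ 6 * Derive_n u 6 x0)) / h))).
    { intros h Hh. unfold Diss. field. lra. }
    apply Ob_scal. apply Ob_divh.
    apply Ob_plus. apply Ob_plus. apply Ob_plus.
    - apply (Ob_mult 2 5); auto.
    - apply (Ob_mult 1 6). apply (Ob_mult 1 0). apply Ob_id. apply Ob_const.
      apply Ob_plus. apply (Ob_mult 6 0). apply Ob_pow. apply Ob_const.
      apply (Ob_weaken 7); auto.
    - apply (Ob_mult 0 7); auto. apply Ob_minus; auto.
    - apply (Ob_mult 1 6); auto. apply (Ob_mult 6 0). apply Ob_pow. apply Ob_const. }
  apply (Ob_ext 6 (fun h => Flux6 (fun y => f (u y)) x0 h + Diss Dbar D u kappa x0 h)).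
  { intros h Hh. symmetry. apply main_identity; auto. }
  apply Ob_plus; auto. apply flux_Ob; auto.
Qed.
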